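(* Let $q$ be a prime power, $k,b,t$ positive integers, and $f:\mathbb{F}_q^k\to \mathrm{Im}(f)$ an arbitrary function. Let $\boldsymbol{x}_1,\ldots,\boldsymbol{x}_{q^k}$ be an enumeration of all vectors of $\mathbb{F}_q^k$. Then \[ N_b\big(\boldsymbol{B}_f^{(1)}(t)\big)\le r_b^f(k,t)\le N_b\big(\boldsymbol{B}_f^{(2)}(t)\big). \]
   Context: For a vector $\boldsymbol{z}=(z_0,\ldots,z_{n-1})\in\mathbb{F}_q^n$, its $b$-symbol read vector is $\pi_b(\boldsymbol{z})=[(z_0,\ldots,z_{b-1}),(z_1,\ldots,z_b),\ldots,(z_{n-1},z_0,\ldots,z_{b-2})]$ (indices modulo $n$), and the $b$-symbol distance of $\boldsymbol{z},\boldsymbol{w}\in\mathbb{F}_q^n$ is $d_b(\boldsymbol{z},\boldsymbol{w})=d_H(\pi_b(\boldsymbol{z}),\pi_b(\boldsymbol{w}))$, i.e. the number of $i\in\{0,\ldots,n-1\}$ with $(z_i,\ldots,z_{i+b-1})\neq(w_i,\ldots,w_{i+b-1})$. A systematic encoding $\mathrm{Enc}:\mathbb{F}_q^k\to\mathbb{F}_q^{k+r}$, $\mathrm{Enc}(\boldsymbol{x})=(\boldsymbol{x},p(\boldsymbol{x}))$ with $p(\boldsymbol{x})\in\mathbb{F}_q^r$, is a function-correcting $b$-symbol code for $f$ (correcting $t$ errors) if $d_b(\mathrm{Enc}(\boldsymbol{x}_1),\mathrm{Enc}(\boldsymbol{x}_2))\ge 2t+1$ for all $\boldsymbol{x}_1,\boldsymbol{x}_2\in\mathbb{F}_q^k$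 with $f(\boldsymbol{x}_1)\ne f(\boldsymbol{x}_2)$. The optimal redundancy $r_b^f(k,t)$ is the smallest $r$ for which such a code exists. For $M\times M$ matrix $\boldsymbol{B}$ with nonnegative integer entries, a $\boldsymbol{B}$-irregular $b$-symbol distance code is a set $\{\boldsymbol{p}_1,\ldots,\boldsymbol{p}_M\}\subseteq \mathbb{F}_q^r$ admitting an ordering with $d_b(\boldsymbol{p}_i,\boldsymbol{p}_j)\ge[\boldsymbol{B}]_{ij}$ for all $i,j$; $N_b(\boldsymbol{B})$ is the smallest length $r$ for which such a code exists. With $[x]^+=\max\{x,0\}$, for vectors $\boldsymbol{x}_1,\ldots,\boldsymbol{x}_M\in\mathbb{F}_q^k$ define $M\times M$ matrices $[\boldsymbol{B}_f^{(1)}(t,\boldsymbol{x}_1,\ldots,\boldsymbol{x}_M)]_{ij}=[2t-b+2-d_b(\boldsymbol{x}_i,\boldsymbol{x}_j)]^+$ if $f(\boldsymbol{x}_i)\ne f(\boldsymbol{x}_j)$ and $0$ otherwise, and $[\boldsymbol{B}_f^{(2)}(t,\boldsymbol{x}_1,\ldots,\boldsymbol{x}_M)]_{ij}=[2t+b-d_b(\boldsymbol{x}_i,\boldsymbol{x}_j)]^+$ if $f(\boldsymbol{x}_i)\ne f(\boldsymbol{x}_j)$ and $0$ otherwise. $\boldsymbol{B}_f^{(1)}(t)$ and $\boldsymbol{B}_f^{(2)}(t)$ denote these matrices for $M=q^k$ and $\boldsymbol{x}_1,\ldots,\boldsymbol{x}_{q^k}$ the enumeration of $\mathbb{F}_q^k$.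 *)

(* Defs.v *)
From HB Require Import structures.
From mathcomp Require Import all_boot all_order all_algebra.
From Stdlib Require Import ClassicalEpsilon.
Set Implicit Arguments.
Unset Strict Implicit.
Unset Printing Implicit Defensive.
Import GRing.Theory.

Definition cshift n (i : 'I_n) (j : nat) : 'I_n := iter j (@ordS n) i.

Definition db (F : finFieldType) (n b : nat) (z w : 'rV[F]_n) : nat :=
  #|[set i : 'I_n | [exists j : 'I_b, z ord0 (cshift i j) != w ord0 (cshift i j)]]|.

(* least natural number satisfying P (chosen classically); this is the
   intended minimum whenever some n satisfies P. *)
Definition least (P : nat -> Prop) : nat :=
  epsilon (inhabits 0%N) (fun n => P n /\ forall m, P m -> (n <= m)%N).

(* Systematic encoding x |-> (x, p x) is a function-correcting b-symbol code
   for f correcting t errors. *)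
Definition is_FCbSC (F : finFieldType) (Y : eqType) (k r b t : nat)
  (f : 'rV[F]_k -> Y) (p : 'rV[F]_k -> 'rV[F]_r) : Prop :=
  forall x1 x2 : 'rV[F]_k, f x1 != f x2 ->
    (2 * t + 1 <= db b (row_mx x1 (p x1)) (row_mx x2 (p x2)))%N.

Definition rbf (F : finFieldType) (Y : eqType) (k b t : nat)
  (f : 'rV[F]_k -> Y) : nat :=
  least (fun r => exists p : 'rV[F]_k -> 'rV[F]_r, is_FCbSC b t f p).

Definition is_irr_code (F : finFieldType) (M b r : nat) (B : 'M[nat]_M)
  (P : 'I_M -> 'rV[F]_r) : Prop :=
  forall i j : 'I_M, (B i j <= db b (P i) (P j))%N.

Definition Nb (F : finFieldType) (M b : nat) (B : 'M[nat]_M) : nat :=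
  least (fun r => exists P : 'I_M -> 'rV[F]_r, is_irr_code b B P).

(* B_f^(1)(t, x_1..x_M) and B_f^(2)(t, x_1..x_M); [a - c]^+ is truncated
   nat subtraction. *)
Definition Bf1 (F : finFieldType) (Y : eqType) (k b t M : nat)
  (f : 'rV[F]_k -> Y) (x : 'I_M -> 'rV[F]_k) : 'M[nat]_M :=
  \matrix_(i, j) (if f (x i) != f (x j)
                  then ((2 * t + 2) - (b + db b (x i) (x j)))%N else 0%N).

Definition Bf2 (F : finFieldType) (Y : eqType) (k b t M : nat)
  (f : 'rV[F]_k -> Y) (x : 'I_M -> 'rV[F]_k) : 'M[nat]_M :=
  \matrix_(i, j) (if f (x i) != f (x j)
                  then ((2 * t + b) - db b (x i) (x j))%N else 0%N).

(* Main.v *)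
Require Import Defs.
From HB Require Import structures.
From mathcomp Require Import all_boot all_order all_algebra.
From mathcomp Require Import zify.
From Stdlib Require Import Classical ClassicalEpsilon.
Set Implicit Arguments. Unset Strict Implicit.

Definition win (N b i m : nat) : bool :=
  ((i <= m) && (m < i + b)) || ((m < i) && (m + N < i + b)).
Definition hitc (N b : nat) (D : nat -> bool) (i : nat) : bool :=
  has (fun m => D m && win N b i m) (iota 0 N).
Definition catD k (Dx Dp : nat -> bool) m := if m < k then Dx m else Dp (m - k).

Lemma hitcP N b (D : nat -> bool) i : reflect (exists m, [/\ m < N, D m & win N b i m]) (hitc N b D i).
Proof.
apply: (iffP hasP) => [[m] | [m [m_lt Dm w]]].
  by rewrite mem_iota add0n => /andP[_ lt] /andP[Dm w]; exists m.
by exists m; rewrite ?mem_iota ?add0n ?m_lt ?Dm.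
Qed.

Lemma nhitc N b (D : nat -> bool) i m : ~~ hitc N b D i -> m < N -> D m -> ~~ win N b i m.
Proof. by move=> /hitcP H lt Dm; apply/negP => w; apply: H; exists m. Qed.

Lemma test a b c : ~~ win a b c 3 -> c < 3 -> 3 >= c + b.
Proof. rewrite /win. lia. Qed.

Lemma cnt_le3 (T : eqType) (s : seq T) (P Q R : pred T) :
  (forall x, x \in s -> P x -> Q x || R x) -> count P s <= count Q s + count R s.
Proof.
elim: s => //= a s IH H.
have IH' := IH (fun x xs => H x (@mem_behead _ (a :: s) x xs)).
have := H a (mem_head _ _).
case: (P a); case: (Q a); case: (R a) => /= h; rewrite ?add0n ?add1n ?addSn ?addnS; lia.
Qed.

Lemma cnt_le3n (s : seq nat) (P Q R : nat -> bool) :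
  (forall x, x \in s -> P x -> Q x || R x) -> count P s <= count Q s + count R s.
Proof. exact: cnt_le3. Qed.

Lemma cnt_sub (T : eqType) (s : seq T) (P Q : pred T) :
  (forall x, x \in s -> P x -> Q x) -> count P s <= count Q s.
Proof.
move=> H; have := @cnt_le3 T s P Q pred0; rewrite count_pred0 addn0; apply.
by move=> x xs Px; rewrite H.
Qed.

Lemma cnt_int a c N : count (fun m => (a <= m) && (m < c)) (iota 0 N) = minn N c - a.
Proof.
elim: N => [|N IH]; first by rewrite /= min0n.
rewrite -addn1 iotaD count_cat IH /= add0n; lia.
Qed.

Lemma cnt_tail N b (P : pred nat) : 0 < b ->
  (forall i, i < N -> P i -> N < i + b) -> count P (iota 0 N) <= b - 1.
Proof.
move=> b0 H.
have := cnt_int (N + 1 - b) N N.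
have : count P (iota 0 N) <= count (fun m => (N + 1 - b <= m) && (m < N)) (iota 0 N).
  apply: cnt_sub => i; rewrite mem_iota add0n => /andP[_ iN] Pi.
  have := H i iN Pi; lia.
lia.
Qed.

Lemma cnt_excl k r b (E1 E2 : pred nat) : 0 < b ->
  (forall i, i < k -> E1 i -> k < i + b) ->
  (forall i, i < r -> E2 i -> r < i + b) ->
  (forall i i', i < k -> i' < r -> E1 i -> E2 i' -> False) ->
  count E1 (iota 0 k) + count E2 (iota 0 r) <= b - 1.
Proof.
move=> b0 H1 H2 H3.
case: (boolP (has E1 (iota 0 k))) => [/hasP[i] | ].
  rewrite mem_iota add0n => /andP[_ ik] E1i.
  have -> : count E2 (iota 0 r) = 0.
    apply/eqP; rewrite eqn0Ngt -has_count; apply/hasP => [[i']].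
    by rewrite mem_iota add0n => /andP[_ i'r] E2i'; case: (H3 i i' ik i'r E1i E2i').
  by rewrite addn0; apply: cnt_tail.
rewrite has_count -leqNgt leqn0 => /eqP ->; rewrite add0n; exact: cnt_tail.
Qed.

Section Cat.
Variables (k r b : nat) (Dx Dp : nat -> bool).
Hypothesis b0 : 0 < b.
Let n := k + r.
Let Dn := catD k Dx Dp.

Lemma count_split (P : pred nat) :
  count P (iota 0 n) = count P (iota 0 k) + count (fun i => P (k + i)) (iota 0 r).
Proof.
rewrite /n iotaD; have -> : iota (0 + k) r = map (addn k) (iota 0 r) by rewrite -iotaDl add0n addn0.
by rewrite count_cat count_map.
Qed.

Ltac hcase H := let m := fresh "m" in let a := fresh "a" in let d := fresh "d" in
  let w := fresh "w" in case/hitcP: H => m [a d w].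

Lemma L1 i : i < k -> hitc n b Dn i -> ~~ hitc k b Dx i -> k < i + b.
Proof.
move=> ik H nH; hcase H; move: d; rewrite /Dn /catD; case: ifP => mk d.
  have := nhitc nH mk d; move: w; rewrite /win; lia.
move: w mk; rewrite /win /n; lia.
Qed.

Lemma L2 i : i < r -> hitc n b Dn (k + i) -> ~~ hitc r b Dp i -> r < i + b.
Proof.
move=> ir H nH; hcase H; move: d; rewrite /Dn /catD; case: ifP => mk d.
  move: w mk; rewrite /win /n; lia.
have mr : m - k < r by move: a mk; rewrite /n; lia.
have := nhitc nH mr d; move: w mk; rewrite /win /n; lia.
Qed.

Lemma L3 i i' : i < k -> i' < r ->
  hitc n b Dn i -> ~~ hitc k b Dx i ->
  hitc n b Dn (k + i') -> ~~ hitc r b Dp i' -> False.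
Proof.
move=> ik ir H1 nH1 H2 nH2.
hcase H1; move: d; rewrite /Dn /catD; case: ifP => mk d.
  have := nhitc nH1 mk d; move: w; rewrite /win; lia.
hcase H2; move: d0; rewrite /Dn /catD; case: ifP => m0k d0.
  have := nhitc nH1 m0k d0.
  have mr : m - k < r by move: a mk; rewrite /n; lia.
  have := nhitc nH2 mr d.
  move: w w0 mk m0k a a0; rewrite /win /n; lia.
have mr : m0 - k < r by move: a0 m0k; rewrite /n; lia.
have := nhitc nH2 mr d0; move: w0 m0k; rewrite /win /n; lia.
Qed.

Lemma U1 i : i < k -> hitc k b Dx i -> ~~ hitc n b Dn i -> k < i + b.
Proof.
move=> ik H nH; hcase H.
have mn : m < n by rewrite /n; lia.
have Dm : Dn m by rewrite /Dn /catD a.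
have := nhitc nH mn Dm; move: w; rewrite /win /n; lia.
Qed.

Lemma U2 i : i < r -> hitc r b Dp i -> ~~ hitc n b Dn (k + i) -> r < i + b.
Proof.
move=> ir H nH; hcase H.
have mn : k + m < n by rewrite /n; lia.
have Dm : Dn (k + m) by rewrite /Dn /catD ltnNge leq_addr /= addKn.
have := nhitc nH mn Dm; move: w; rewrite /win /n; lia.
Qed.

Lemma U3 i i' : i < k -> i' < r ->
  hitc k b Dx i -> ~~ hitc n b Dn i ->
  hitc r b Dp i' -> ~~ hitc n b Dn (k + i') -> False.
Proof.
move=> ik ir H1 nH1 H2 nH2; hcase H1; hcase H2.
have mn : m < n by rewrite /n; lia.
have Dm : Dn m by rewrite /Dn /catD a.
have mn0 : k + m0 < n by rewrite /n; lia.
have Dm0 : Dn (k + m0) by rewrite /Dn /catD ltnNge leq_addr /= addKn.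
have := nhitc nH1 mn Dm; have := nhitc nH2 mn0 Dm0;
have := nhitc nH1 mn0 Dm0; have := nhitc nH2 mn Dm.
move: w w0; rewrite /win /n; lia.
Qed.

Lemma catL : count (hitc n b Dn) (iota 0 n) <=
  count (hitc k b Dx) (iota 0 k) + count (hitc r b Dp) (iota 0 r) + (b - 1).
Proof.
rewrite count_split.
have h1 := @cnt_le3n (iota 0 k) (hitc n b Dn) (hitc k b Dx)
  (fun i => hitc n b Dn i && ~~ hitc k b Dx i).
have h2 := @cnt_le3n (iota 0 r) (fun i => hitc n b Dn (k + i)) (hitc r b Dp)
  (fun i => hitc n b Dn (k + i) && ~~ hitc r b Dp i).
have h3 := @cnt_excl k r b (fun i => hitc n b Dn i && ~~ hitc k b Dx i)
  (fun i => hitc n b Dn (k + i) && ~~ hitc r b Dp i) b0.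
have := h1 (fun x _ H => ltac:(by rewrite H; case: (hitc k b Dx x))).
have := h2 (fun x _ H => ltac:(by rewrite H; case: (hitc r b Dp x))).
have := h3 (fun i ik => ltac:(move=> /andP[]; exact: L1 ik))
  (fun i ir => ltac:(move=> /andP[]; exact: L2 ir))
  (fun i i' ik ir => ltac:(move=> /andP[g1 g2] /andP[g3 g4]; exact: L3 ik ir g1 g2 g3 g4)).
lia.
Qed.

Lemma catU : count (hitc k b Dx) (iota 0 k) + count (hitc r b Dp) (iota 0 r) <=
  count (hitc n b Dn) (iota 0 n) + (b - 1).
Proof.
rewrite count_split.
have h1 := @cnt_le3n (iota 0 k) (hitc k b Dx) (hitc n b Dn)
  (fun i => hitc k b Dx i && ~~ hitc n b Dn i).
have h2 := @cnt_le3n (iota 0 r) (hitc r b Dp) (fun i => hitc n b Dn (k + i))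
  (fun i => hitc r b Dp i && ~~ hitc n b Dn (k + i)).
have h3 := @cnt_excl k r b (fun i => hitc k b Dx i && ~~ hitc n b Dn i)
  (fun i => hitc r b Dp i && ~~ hitc n b Dn (k + i)) b0.
have := h1 (fun x _ H => ltac:(by rewrite H; case: (hitc n b Dn x))).
have := h2 (fun x _ H => ltac:(by rewrite H; case: (hitc n b Dn (k + x)))).
have := h3 (fun i ik => ltac:(move=> /andP[]; exact: U1 ik))
  (fun i ir => ltac:(move=> /andP[]; exact: U2 ir))
  (fun i i' ik ir => ltac:(move=> /andP[g1 g2] /andP[g3 g4]; exact: U3 ik ir g1 g2 g3 g4)).
lia.
Qed.
End Cat.


Lemma cnt_card (N : nat) (P : 'I_N -> bool) : #|[set i | P i]| = count P (enum 'I_N).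
Proof. rewrite cardsE cardE /enum_mem size_filter.
have -> : [seq x <- Finite.enum 'I_N | mem 'I_N x] = Finite.enum 'I_N by apply/all_filterP/allP.
by rewrite -enumT. Qed.

Definition dif (F : finFieldType) N (z w : 'rV[F]_N) (m : nat) : bool :=
  [exists j : 'I_N, (val j == m) && (z ord0 j != w ord0 j)].

Lemma cshiftE n (i : 'I_n) j : val (cshift i j) = (i + j) %% n.
Proof.
elim: j => [|j IH]; first by rewrite addn0 modn_small.
rewrite /cshift iterS -/(cshift i j) /= IH addnS -addn1 modnDml addn1 //.
Qed.

Lemma hit_ex (F : finFieldType) N b (z w : 'rV[F]_N) (i : 'I_N) :
  [exists j : 'I_b, z ord0 (cshift i j) != w ord0 (cshift i j)] = hitc N b (dif z w) i.
Proof.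
apply/existsP/hitcP => [[j Hj] | [m [mN dm wm]]].
  exists (cshift i j); split; first exact: ltn_ord.
    by apply/existsP; exists (cshift i j); rewrite eqxx Hj.
  rewrite cshiftE.
  have N0 : 0 < N := leq_ltn_trans (leq0n i) (ltn_ord i).
  have mN := ltn_pmod (i + j) N0.
  have := divn_eq (i + j) N.
  have : (i + j) %/ N * N = 0 \/ N <= (i + j) %/ N * N.
    by case: ((i + j) %/ N) => [|q]; [left | right; rewrite mulSn leq_addr].
  move: mN; have := ltn_ord i; have := ltn_ord j.
  move: ((i + j) %/ N * N) ((i + j) %% N) => Q M.
  rewrite /win; lia.
have jb : (if i <= m then m - i else m + N - i) < b.
  by move: wm (ltn_ord i); rewrite /win; move: (nat_of_ord i) => ii; case: (leqP ii m) => /= h; lia.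
exists (Ordinal jb).
case/existsP: dm => j0 /andP[/eqP j0m H].
suff -> : cshift i (Ordinal jb) = j0 by [].
apply: val_inj; rewrite cshiftE /= j0m.
case: (leqP i m) => h.
  by rewrite subnKC // modn_small.
rewrite (_ : i + (m + N - i) = m + N); last by move: h (ltn_ord i); move: (nat_of_ord i) => ii; lia.
by rewrite modnDr modn_small.
Qed.

Lemma dbE (F : finFieldType) N b (z w : 'rV[F]_N) :
  db b z w = count (hitc N b (dif z w)) (iota 0 N).
Proof.
rewrite /db cnt_card -val_enum_ord count_map; apply: eq_count => i /=.
exact: hit_ex.
Qed.

Lemma dif_row (F : finFieldType) k r (x1 x2 : 'rV[F]_k) (p1 p2 : 'rV[F]_r) m :
  dif (row_mx x1 p1) (row_mx x2 p2) m = catD k (dif x1 x2) (dif p1 p2) m.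
Proof.
rewrite /catD; apply/existsP/idP.
  case=> j /andP[/eqP <- H]; case: splitP => [j1 e | j2 e].
    have ej : j = lshift r j1 by apply: val_inj.
    move: H; rewrite ej !row_mxEl => H.
    by apply/existsP; exists j1; rewrite /= eqxx H.
  have ej : j = rshift k j2 by apply: val_inj.
  move: H; rewrite ej !row_mxEr => H.
  by apply/existsP; exists j2; rewrite /= addKn eqxx H.
case: ifP => mk /existsP[j /andP[/eqP jm H]].
  exists (lshift r j); rewrite /= jm eqxx /=; by rewrite !row_mxEl.
exists (rshift k j); rewrite /= jm subnKC ?eqxx /=; last by lia.
by rewrite !row_mxEr.
Qed.

Lemma db_cat (F : finFieldType) k r b (x1 x2 : 'rV[F]_k) (p1 p2 : 'rV[F]_r) :
  db b (row_mx x1 p1) (row_mx x2 p2) =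
  count (hitc (k + r) b (catD k (dif x1 x2) (dif p1 p2))) (iota 0 (k + r)).
Proof.
rewrite dbE; apply: eq_count => i; apply: eq_has => m /=; by rewrite dif_row.
Qed.


Lemma leastP (P : nat -> Prop) n : P n -> P (least P) /\ (forall m, P m -> least P <= m).
Proof.
move=> Pn; rewrite /least; apply: (epsilon_spec (inhabits 0) (fun n => P n /\ forall m, P m -> n <= m)).
elim/ltn_ind: n Pn => n IH Pn.
case: (classic (exists m, P m /\ m < n)) => [[m [Pm lt]] | H]; first exact: IH m lt Pm.
exists n; split => // m Pm; rewrite leqNgt; apply/negP => lt; by apply: H; exists m.
Qed.

Definition blk (F : finFieldType) M s (i : 'I_M) : 'rV[F]_(M * s) :=
  \row_(m < M * s) (if (i * s <= m) && (m < i * s + s) then 1%R else 0%R).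

Lemma db_ge (F : finFieldType) N b (z w : 'rV[F]_N) : 0 < b ->
  count (dif z w) (iota 0 N) <= db b z w.
Proof.
move=> b0; rewrite dbE; apply: cnt_sub => m; rewrite mem_iota add0n => /andP[_ mN] dm.
apply/hitcP; exists m; split => //; rewrite /win; lia.
Qed.

Lemma blk_db (F : finFieldType) M s b (i j : 'I_M) : 0 < b -> i != j ->
  s <= db b (blk F s i) (blk F s j).
Proof.
move=> b0 ij; apply: leq_trans (db_ge _ _ b0).
have hi : i * s + s <= M * s by rewrite addnC -mulSn leq_mul2r ltn_ord orbT.
have := cnt_int (i * s) (i * s + s) (M * s).
have : count (fun m => (i * s <= m) && (m < i * s + s)) (iota 0 (M * s))
    <= count (dif (blk F s i) (blk F s j)) (iota 0 (M * s)).
  apply: cnt_sub => m; rewrite mem_iota add0n => /andP[_ mN] hm.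
  apply/existsP; exists (Ordinal mN); rewrite eqxx /= !mxE hm.
  have : ~~ ((j * s <= m) && (m < j * s + s)).
    case: (ltngtP i j) => [lt | gt | eq].
    - have := leq_mul lt (leqnn s); rewrite mulSn; move: hm; lia.
    - have := leq_mul gt (leqnn s); rewrite mulSn; move: hm; lia.
    - by move/eqP: ij; case; apply: val_inj.
  by move/negbTE => ->; exact: GRing.oner_neq0.
lia.
Qed.

Unset Implicit Arguments.
Set Strict Implicit.

Theorem theorem3p2 (F : finFieldType) (Y : eqType) (k b t : nat)
  (f : 'rV[F]_k -> Y) (x : 'I_#|{: 'rV[F]_k}| -> 'rV[F]_k) :
  (0 < k)%N -> (0 < b)%N -> (0 < t)%N -> bijective x ->
  (Nb F b (Bf1 b t f x) <= rbf b t f)%N /\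
  (rbf b t f <= Nb F b (Bf2 b t f x))%N.
Proof.
move=> k0 b0 t0 [g xg gx].
set M := #|{: 'rV[F]_k}|.
have ex2 : exists P : 'I_M -> 'rV[F]_(M * (2 * t + b)), is_irr_code b (Bf2 b t f x) P.
  exists (@blk F M (2 * t + b)) => i j; rewrite mxE.
  case: (eqVneq i j) => [-> | ij]; first by rewrite eqxx.
  case: ifP => _ //; apply: leq_trans (leq_subr _ _) _; exact: blk_db.
have [P2 P2code] : exists P : 'I_M -> 'rV[F]_(Nb F b (Bf2 b t f x)), is_irr_code b (Bf2 b t f x) P.
  exact: (proj1 (leastP (P := fun r => exists P : 'I_M -> 'rV[F]_r, is_irr_code b (Bf2 b t f x) P) ex2)).
have ex1 : exists p : 'rV[F]_k -> 'rV[F]_(Nb F b (Bf2 b t f x)), is_FCbSC b t f p.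
  exists (fun v => P2 (g v)) => x1 x2 fne.
  have h := P2code (g x1) (g x2); rewrite mxE !gx fne in h.
  have := catU k (Nb F b (Bf2 b t f x)) (dif x1 x2) (dif (P2 (g x1)) (P2 (g x2))) b0.
  rewrite -!dbE -db_cat; lia.
have [p pcode] : exists p : 'rV[F]_k -> 'rV[F]_(rbf b t f), is_FCbSC b t f p.
  exact: (proj1 (leastP (P := fun r => exists p : 'rV[F]_k -> 'rV[F]_r, is_FCbSC b t f p) ex1)).
split.
  have ex1' : exists P : 'I_M -> 'rV[F]_(rbf b t f), is_irr_code b (Bf1 b t f x) P.
    exists (fun i => p (x i)) => i j; rewrite mxE; case: ifP => // fne.
    have h := pcode (x i) (x j) fne.
    have := catL k (rbf b t f) (dif (x i) (x j)) (dif (p (x i)) (p (x j))) b0.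
    rewrite -!dbE -db_cat; lia.
  by have [_ ] := leastP (P := fun r => exists P : 'I_M -> 'rV[F]_r, is_irr_code b (Bf1 b t f x) P) ex1'; apply; exact: ex1'.
by have [_ ] := leastP (P := fun r => exists p : 'rV[F]_k -> 'rV[F]_r, is_FCbSC b t f p) ex1; apply; exact: ex1.
Qed.
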